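(* Let $p\neq q$ be primes. (a) If $1\le a\le m$ and $1\le b\le n$ are integers, then $\langle p^a,q^b\rangle\le_P\langle p^m,q^n\rangle$. (b) If $n\ge1$ and $a,b\ge1$ are integers with $2\le a+b\le n+1$, then $\langle p^a,q^b\rangle\le_P B_n(p,q)$, where $B_n(p,q)=\langle p^n,p^{n-1}q,\ldots,pq^{n-1},q^n\rangle$. (c) Let $V$ be a numerical semigroup generated by $\{n_1,\ldots,n_k\}$ ($k\ge2$), let $d=\gcd(n_1,\ldots,n_{k-1})$ and let $U=\langle n_1/d,\ldots,n_{k-1}/d,n_k\rangle$. Then $U$ and $V$ are polynomially related (namely $U\le_P V$).
   Context: A numerical semigroup is a submonoid of $(\mathbb N,+)$ with finite complement in $\mathbb N$; $\langle A\rangle$ denotes the submonoid generated by $A$. $\mathrm H_S(x)=\sum_{s\in S}x^s$. Numerical semigroups $S$ and $T$ are polynomially related, written $S\le_P T$, if there exist $f(x)\in\mathbb Z[x]$ and an integer $w\ge1$ with $\mathrm H_S(x^w)f(x)=\mathrm H_T(x)$. *)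

(* Defs.v *)
From HB Require Import structures.
From mathcomp Require Import all_boot all_order all_algebra.
Set Implicit Arguments. Unset Strict Implicit. Unset Printing Implicit Defensive.
Import Order.TTheory GRing.Theory Num.Theory.

Definition is_numsg (S : pred nat) : Prop :=
  [/\ S 0, (forall x y, S x -> S y -> S (x + y)) &
      exists N, forall n, N <= n -> S n].

(* <A> : the submonoid of (N,+) generated by the finite list A:
   n is in <A> iff n = sum_i c_i * A_i for some natural coefficients c_i
   (coefficients may be bounded by n without loss). *)
Definition gen (A : seq nat) : pred nat :=
  fun n => [exists c : {ffun 'I_(size A) -> 'I_n.+1},
              \sum_(i < size A) c i * nth 0 A i == n].

(* Coefficient of x^j in H_S(x^w) = sum_{s in S} x^(w s). *)
Definition HSw (S : pred nat) (w j : nat) : int :=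
  Posz ((w %| j) && S (j %/ w)).

(* S <=_P T : exists f in Z[x] and w >= 1 with H_S(x^w) f(x) = H_T(x),
   as an identity of formal power series (coefficientwise). *)
Definition poly_related (S T : pred nat) : Prop :=
  exists (f : {poly int}) (w : nat), 1 <= w /\
    forall k : nat,
      (\sum_(i < k.+1) f`_i * HSw S w (k - i))%R = Posz (T k).

Definition Bn (n p q : nat) : pred nat :=
  gen [seq p ^ (n - i) * q ^ i | i <- iota 0 n.+1].

(* Main.v *)
Require Import Defs.
From mathcomp Require Import all_boot all_order all_algebra.
From mathcomp Require Import ring zify.
Set Implicit Arguments. Unset Strict Implicit. Unset Printing Implicit Defensive.

Fixpoint inS (A : seq nat) (n : nat) : Prop :=
  match A with
  | [::] => n = 0
  | a :: A' => exists j m, inS A' m /\ n = j * a + m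
  end.

Lemma genE (A : seq nat) n :
  gen A n <-> exists c : 'I_(size A) -> nat, \sum_(i < size A) c i * nth 0 A i = n.
Proof.
split.
- case/existsP=> c /eqP H. by exists (fun i => val (c i)).
- case=> c H. apply/existsP.
  have Hb : forall i, c i * (nth 0 A i != 0) < n.+1.
    move=> i; case: eqP => [_|Hn]; first by rewrite muln0.
    rewrite muln1 ltnS -H (bigD1 i) //=.
    apply: leq_trans (leq_addr _ _).
    by rewrite leq_pmulr // lt0n; apply/eqP.
  exists [ffun i => Ordinal (Hb i)]. apply/eqP; rewrite -[RHS]H.
  apply: eq_bigr=> i _; rewrite ffunE /=.
  by case: eqP=> [->|]; rewrite ?muln0 ?muln1.
Qed.

Lemma inSE (A : seq nat) n :
  inS A n <-> exists c : 'I_(size A) -> nat, \sum_(i < size A) c i * nth 0 A i = n.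
Proof.
elim: A n => [|a A IH] n /=.
  split; first by move=> ->; exists (fun _ => 0); rewrite big_ord0.
  by case=> c; rewrite big_ord0.
split.
- case=> j [m [/IH [c Hc] ->]].
  exists (fun i : 'I_(size A).+1 => if unlift ord0 i is Some i' then c i' else j).
  rewrite big_ord_recl /= unlift_none -Hc; congr (_ + _).
  by apply: eq_bigr=> i _; rewrite liftK.
- case=> c; rewrite big_ord_recl /= => Hc.
  exists (c ord0), (\sum_(i < size A) c (lift ord0 i) * nth 0 A i).
  split=> //; apply/IH. by exists (fun i => c (lift ord0 i)).
Qed.

Lemma genS A n : gen A n <-> inS A n.
Proof. by rewrite genE inSE. Qed.

Lemma inS_add A x y : inS A x -> inS A y -> inS A (x + y).
Proof.
elim: A x y => [|a A IH] x y /=; first by move=> -> ->.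
case=> j [m [Hm ->]] [j' [m' [Hm' ->]]].
exists (j + j'), (m + m'); split; first exact: IH.
by rewrite mulnDl; ring.
Qed.

Lemma inS0 A : inS A 0.
Proof. elim: A => [|a A IH] //=; by exists 0, 0. Qed.

Lemma inS_mul A a j : a \in A -> inS A (j * a).
Proof.
elim: A => [|b A IH] //=; rewrite inE; case/orP=> [/eqP ->|H].
  by exists j, 0; split; [exact: inS0|rewrite addn0].
by exists 0, (j * a); split; [exact: IH|].
Qed.

Lemma inS_rcons A x n :
  inS (rcons A x) n <-> exists m j, inS A m /\ n = m + j * x.
Proof.
elim: A n => [|a A IH] n /=.
  split; first by case=> j [m [-> ->]]; exists 0, j; rewrite addn0.
  by case=> m [j [-> ->]]; exists j, 0; rewrite addn0.
split.
- case=> j [m [/IH [m' [j' [H1 ->]]] ->]].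
  exists (j * a + m'), j'; split; first by exists j, m'.
  by rewrite addnA.
- case=> m [j [[j' [m' [H1 ->]]] ->]].
  exists j', (m' + j * x); split; first by apply/IH; exists m', j.
  by rewrite addnA.
Qed.

Lemma inS_dvd A g n : (forall x, x \in A -> g %| x) -> inS A n -> g %| n.
Proof.
elim: A n => [|a A IH] n /= H; first by move=> ->.
case=> j [m [Hm ->]]. rewrite dvdn_add //.
  by rewrite dvdn_mull // H // inE eqxx.
by apply: IH Hm => x Hx; apply: H; rewrite inE Hx orbT.
Qed.

Lemma inS_mapM A q n : 0 < q ->
  inS (map (muln q) A) n <-> exists M, inS A M /\ n = q * M.
Proof.
move=> q0; elim: A n => [|a A IH] n /=.
  by split; [move=> ->; exists 0; rewrite muln0|case=> M [-> ->]; rewrite muln0].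
split.
- case=> j [m [/IH [M [HM ->]] ->]]. exists (j * a + M); split; first by exists j, M.
  ring.
- case=> M [[j [m [Hm ->]]] ->]. exists j, (q * m); split; first by apply/IH; exists m.
  ring.
Qed.

Lemma inS_mapD A d m : 0 < d -> (forall x, x \in A -> d %| x) ->
  inS (map (divn^~ d) A) m <-> inS A (d * m).
Proof.
move=> d0 H.
have EA : A = map (muln d) (map (divn^~ d) A).
  rewrite -map_comp -[LHS]map_id; apply/eq_in_map=> x Hx /=.
  by rewrite mulnC divnK // H.
split.
- move=> Hm. rewrite EA; apply/inS_mapM => //.
  by exists m.
- rewrite {1}EA; case/inS_mapM=> // M [HM /eqP]; rewrite eqn_pmul2l // => /eqP ->.
  exact: HM.
Qed.
Import GRing.Theory.

Lemma sum_single (h : nat -> int) k x :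
  (\sum_(i < k.+1) ((i : nat) == x)%:R * h (k - i)%N = if (x <= k)%N then h (k - x)%N else 0)%R.
Proof.
case: ifP=> Hx.
  rewrite (bigD1 (Ordinal (Hx : x < k.+1))) //= eqxx mul1r big1 ?addr0 // => i Hi.
  case: eqP=> [Ei|]; last by rewrite mul0r.
  by move: Hi; rewrite -val_eqE /= Ei eqxx.
rewrite big1 // => i _; case: eqP=> [Ei|]; last by rewrite mul0r.
by move: (ltn_ord i); rewrite Ei ltnS Hx.
Qed.

Lemma decomp (S T : pred nat) (w : nat) (I : finType) (F : I -> nat) :
  (forall i s, S s -> T (F i + w * s)) ->
  (forall t, T t -> exists i s, S s /\ t = F i + w * s) ->
  (forall i1 i2 s1 s2, S s1 -> S s2 -> F i1 + w * s1 = F i2 + w * s2 -> i1 = i2) ->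
  0 < w ->
  forall k, (\sum_(i < k.+1) (\sum_(j : I) 'X^(F j) : {poly int})`_i * HSw S w (k - i)%N)%R
            = Posz (T k).
Proof.
move=> H1 H2 H3 w0 k.
have E : (\sum_(i < k.+1) (\sum_(j : I) 'X^(F j) : {poly int})`_i * HSw S w (k - i)%N)%R
   = (\sum_(j : I) Posz ((F j <= k)%N && (w %| k - F j)%N && S ((k - F j) %/ w)%N))%R.
  under eq_bigr do rewrite coef_sum big_distrl /=.
  rewrite exchange_big /=; apply: eq_bigr=> j _.
  under eq_bigr do rewrite coefXn.
  rewrite sum_single; case: ifP=> //.
have B : forall j, (F j <= k) && (w %| k - F j) && S ((k - F j) %/ w) <->
                   exists s, S s /\ k = F j + w * s.
  move=> j; split.
    case/andP=> [/andP [Hl Hd] HS]; exists ((k - F j) %/ w); split=> //.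
    by rewrite mulnC divnK // subnKC.
  case=> s [Hs ->]; rewrite leq_addr addKn dvdn_mulr //= mulKn //.
rewrite E; case HT: (T k).
  case: (H2 k HT)=> i [s [Hs Hk]].
  rewrite (bigD1 i) //= big1 ?addr0.
    suff -> : (F i <= k) && (w %| k - F i) && S ((k - F i) %/ w) by [].
    by apply/B; exists s.
  move=> j Hj; case: ((F j <= k) && (w %| k - F j) && S ((k - F j) %/ w)) / idP => // /B.
  case=> s' [Hs' Hk']. by move: Hj; rewrite (H3 j i s' s) ?eqxx // -Hk' -Hk.
rewrite big1 // => j _.
case: ((F j <= k) && (w %| k - F j) && S ((k - F j) %/ w)) / idP => // /B.
by case=> s [Hs Hk]; move: HT; rewrite Hk H1.
Qed.
Local Open Scope ring_scope.

Definition eqK (K : nat) (A B : {poly int}) := forall i, (i <= K)%N -> A`_i = B`_i.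
Definition tr (K : nat) (h : nat -> int) : {poly int} := \poly_(i < K.+1) h i.

Lemma convE (f : {poly int}) h K k : (k <= K)%N ->
  \sum_(i < k.+1) f`_i * h (k - i)%N = (f * tr K h)`_k.
Proof.
move=> kK; rewrite coefM; apply: eq_bigr=> i _; rewrite coef_poly.
by rewrite ltnS (leq_trans (leq_subr _ _) kK).
Qed.

Lemma conv_eqK (f : {poly int}) h g K :
  (forall k, \sum_(i < k.+1) f`_i * h (k - i)%N = g k) -> eqK K (f * tr K h) (tr K g).
Proof. by move=> H i iK; rewrite -convE // H coef_poly ltnS iK. Qed.

Lemma eqK_conv (f : {poly int}) h g :
  (forall K, eqK K (f * tr K h) (tr K g)) -> forall k, \sum_(i < k.+1) f`_i * h (k - i)%N = g k.
Proof. by move=> H k; rewrite (convE _ _ (leqnn k)) H // coef_poly ltnS leqnn. Qed.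

Lemma eqK_sym K (A B : {poly int}) : eqK K A B -> eqK K B A.
Proof. by move=> H i Hi; rewrite H. Qed.
Lemma eqK_trans K (A B C : {poly int}) : eqK K A B -> eqK K B C -> eqK K A C.
Proof. by move=> H1 H2 i Hi; rewrite H1 ?H2. Qed.
Lemma eqK_eq K (A B : {poly int}) : A = B -> eqK K A B.
Proof. by move=> ->. Qed.
Lemma eqK_mull K (M A B : {poly int}) : eqK K A B -> eqK K (M * A) (M * B).
Proof.
move=> H i Hi; rewrite !coefM; apply: eq_bigr=> j _; rewrite H //.
exact: leq_trans (leq_subr _ _) Hi.
Qed.
Lemma eqK_cancel K (M A B : {poly int}) : M`_0 = 1 -> eqK K (M * A) (M * B) -> eqK K A B.
Proof.
move=> M0 H i; elim/ltn_ind: i => i IH HK.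
move: (H i HK); rewrite !coefM !big_ord_recl /= M0 !mul1r subn0.
rewrite (eq_bigr (fun j : 'I_i => M`_(bump 0 j) * B`_(i - bump 0 j))) => [/addIr //|j _].
have lj := ltn_ord j.
rewrite /bump leq0n add1n in IH *; rewrite IH //; [lia|]. apply: leq_trans (leq_subr _ _) HK.
Qed.

Definition C {R : comRingType} (k : nat) (z : R) := \sum_(i < k) z ^+ i.

Lemma C_add {R : comRingType} m n (z : R) : C (m + n) z = C m z + z ^+ m * C n z.
Proof.
rewrite /C big_split_ord /= big_distrr /=; congr (_ + _).
by apply: eq_bigr=> i _; rewrite exprD.
Qed.

Lemma C_mul {R : comRingType} a b (z : R) : C a z * C b (z ^+ a) = C (a * b) z.
Proof.
elim: b => [|b IH]; first by rewrite muln0 /C !big_ord0 mulr0.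
rewrite mulnS addnC C_add -IH /C big_ord_recr /= -/(C b _) -/(C a _) -exprM.
by rewrite mulrDr [X in _ + X]mulrC.
Qed.

Lemma C_prod {R : comRingType} q t (z : R) :
  \prod_(i < t) C q (z ^+ (q ^ i)) = C (q ^ t) z.
Proof.
elim: t => [|t IH]; first by rewrite big_ord0 expn0 /C big_ord1 expr0.
by rewrite big_ord_recr /= IH C_mul expnSr.
Qed.

Definition dv {R : comRingType} (a b : R) := exists c, b = a * c.

Lemma dv_mul {R : comRingType} (a b c d : R) : dv a b -> dv c d -> dv (a * c) (b * d).
Proof. by case=> x -> [y ->]; exists (x * y); ring. Qed.

Lemma dv_prod {R : comRingType} n (F G : nat -> R) :
  (forall i, (i < n)%N -> dv (F i) (G i)) -> dv (\prod_(i < n) F i) (\prod_(i < n) G i).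
Proof.
move=> H; apply: (big_ind2 (fun x y => dv x y)).
- by exists 1; rewrite mulr1.
- by move=> ? ? ? ?; apply: dv_mul.
- by move=> i _; apply: H.
Qed.

Lemma uniq_res a q c1 c2 s1 s2 : coprime a q -> (c1 < q)%N -> (c2 < q)%N ->
  (c1 * a + q * s1 = c2 * a + q * s2)%N -> c1 = c2.
Proof.
wlog le12 : c1 c2 s1 s2 / (c1 <= c2)%N.
  move=> W co h1 h2 E; case: (leqP c1 c2)=> H; first exact: W E.
  by symmetry; apply: (W c2 c1 s2 s1) => //; apply: ltnW.
move=> co h1 h2 E.
have D : (q %| (c2 - c1) * a)%N.
  have -> : ((c2 - c1) * a = q * s1 - q * s2)%N.
    rewrite mulnBl; move: E; set x1 := (c1 * a)%N; set x2 := (c2 * a)%N;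
    set y1 := (q * s1)%N; set y2 := (q * s2)%N; lia.
  by rewrite -mulnBr dvdn_mulr.
rewrite Gauss_dvdl in D; last by rewrite coprime_sym.
have : (c2 - c1 < q)%N by lia.
case: (posnP (c2 - c1)) => [|Hp]; first by lia.
by have := dvdn_leq Hp D; lia.
Qed.

Lemma divC {R : comRingType} k m (z : R) : coprime k m -> (0 < k)%N -> dv (C k z) (C k (z ^+ m)).
Proof.
move=> co k0.
have Hd : forall a, dv (C k z) (z ^+ a - z ^+ (a %% k)).
  move=> a; rewrite {1}(divn_eq a k) exprD mulnC exprM.
  exists ((z - 1) * C (a %/ k) (z ^+ k) * z ^+ (a %% k)).
  have E1 := subrX1 (z ^+ k) (a %/ k). have E2 := subrX1 z k.
  rewrite -/(C _ _) in E1 E2.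
  transitivity ((z ^+ k ^+ (a %/ k) - 1) * z ^+ (a %% k)); first by ring.
  rewrite E1 E2 -/(C k z); ring.
have Hs : dv (C k z) (\sum_(i < k) (z ^+ (m * i) - z ^+ ((m * i) %% k))).
  apply: (big_ind (fun x => dv (C k z) x)).
  - by exists 0; rewrite mulr0.
  - by move=> x y [cx ->] [cy ->]; exists (cx + cy); rewrite mulrDr.
  - by move=> i _; apply: Hd.
have Hr : \sum_(i < k) z ^+ ((m * i) %% k) = C k z.
  pose h (i : 'I_k) := Ordinal (ltn_pmod (m * i) k0).
  have hinj : injective h.
    move=> i j /(congr1 val) /= Hij; apply: val_inj => /=.
    wlog le : i j Hij / (i <= j)%N.
      by move=> W; case: (leqP i j) => H; [apply: W|symmetry; apply: W => //; apply: ltnW].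
    have : (k %| m * j - m * i)%N by rewrite -eqn_mod_dvd ?leq_mul2l ?le ?orbT // Hij.
    rewrite -mulnBr Gauss_dvdr // => Hd2.
    case: (posnP (j - i)) => [|Hp]; first by lia.
    have := dvdn_leq Hp Hd2; have := ltn_ord j; lia.
  by rewrite /C [RHS](reindex_inj hinj).
case: Hs => c Hc; exists (c + 1).
have -> : C k (z ^+ m) = \sum_(i < k) (z ^+ (m * i) - z ^+ ((m * i) %% k))
                          + \sum_(i < k) z ^+ ((m * i) %% k).
  by rewrite -big_split /C /=; apply: eq_bigr => i _; rewrite exprM subrK.
by rewrite Hc Hr; ring.
Qed.
Local Close Scope ring_scope.

Lemma decomp_rel (S T : pred nat) (w : nat) (I : finType) (F : I -> nat) :
  (forall i s, S s -> T (F i + w * s)) ->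
  (forall t, T t -> exists i s, S s /\ t = F i + w * s) ->
  (forall i1 i2 s1 s2, S s1 -> S s2 -> F i1 + w * s1 = F i2 + w * s2 -> i1 = i2) ->
  0 < w -> poly_related S T.
Proof.
move=> H1 H2 H3 w0; exists (\sum_(j : I) 'X^(F j))%R, w; split=> //.
exact: decomp.
Qed.

Lemma big_gcd_dvd (B : seq nat) x : x \in B -> \big[gcdn/0]_(y <- B) y %| x.
Proof.
elim: B => [|b B IH] //; rewrite inE big_cons; case/orP=> [/eqP ->|H].
  exact: dvdn_gcdl.
exact: dvdn_trans (dvdn_gcdr _ _) (IH H).
Qed.

Lemma partc (B : seq nat) (nk : nat) :
     1 <= size B ->
     all (fun x => 0 < x) (rcons B nk) ->
     is_numsg (gen (rcons B nk)) ->
     let d := \big[gcdn/0]_(x <- B) x in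
     poly_related (gen (rcons [seq x %/ d | x <- B] nk)) (gen (rcons B nk)).
Proof.
move=> sB; rewrite all_rcons => /andP [nk0 allB] [_ _ [N HN]] d.
have Hd : forall x, x \in B -> d %| x by move=> x; apply: big_gcd_dvd.
have d0 : 0 < d.
  move: sB allB; rewrite /d; case: B {Hd HN d} => [|b B] //= _ /andP [b0 _].
  by rewrite big_cons gcdn_gt0 b0.
have co : coprime d nk.
  have Hg : forall x, x \in rcons B nk -> gcdn d nk %| x.
    move=> x; rewrite mem_rcons inE; case/orP=> [/eqP ->|/Hd]; first exact: dvdn_gcdr.
    exact: dvdn_trans (dvdn_gcdl _ _).
  have g0 : 0 < gcdn d nk by rewrite gcdn_gt0 d0.
  have HNg : N <= N * gcdn d nk + 1 by nia.
  have := HN (N * gcdn d nk + 1) HNg.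
  move/genS/(inS_dvd Hg); rewrite dvdn_addr ?dvdn_mull // dvdn1.
  by rewrite /coprime.
have EB : forall m, inS [seq x %/ d | x <- B] m <-> inS B (d * m).
  move=> m; exact: inS_mapD.
apply: (@decomp_rel _ _ d 'I_d (fun i => i * nk)) => //.
- move=> i s /genS /inS_rcons [m [j [Hm ->]]]; apply/genS/inS_rcons.
  exists (d * m), (i + d * j); split; first by apply/EB.
  ring.
- move=> t /genS /inS_rcons [M [J [HM ->]]].
  have dM := inS_dvd Hd HM.
  exists (Ordinal (ltn_pmod J d0)), (M %/ d + J %/ d * nk); split.
    apply/genS/inS_rcons; exists (M %/ d), (J %/ d); split=> //.
    by apply/EB; rewrite mulnC divnK.
  rewrite /= {1}(divn_eq J d) -{1}(divnK dM); ring.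
- move=> i1 i2 s1 s2 _ _ E; apply: val_inj => /=.
  by apply: (uniq_res (a:=nk) (q:=d) (s1:=s1) (s2:=s2)); rewrite // coprime_sym.
Qed.

Lemma gen2 x y t : gen [:: x; y] t <-> exists u v, t = u * x + v * y.
Proof.
rewrite genS /=; split.
  by case=> u [m' [[v [m'' [-> ->]]] ->]]; exists u, v; rewrite addn0.
by case=> u [v ->]; exists u, (v * y); split=> //; exists v, 0; rewrite addn0.
Qed.

Lemma prime_co p q : prime p -> prime q -> p != q -> coprime p q.
Proof. by move=> pp pq npq; rewrite prime_coprime // dvdn_prime2 // (negbTE npq). Qed.

Lemma parta p q : prime p -> prime q -> p != q ->
     forall a b m n : nat, 1 <= a <= m -> 1 <= b <= n ->
       poly_related (gen [:: p ^ a; q ^ b]) (gen [:: p ^ m; q ^ n]).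
Proof.
move=> pp pq npq a b m n /andP [a1 am] /andP [b1 bn].
have co := prime_co pp pq npq.
have p0 := prime_gt0 pp; have q0 := prime_gt0 pq.
set P := p ^ (m - a); set Qb := q ^ (n - b).
have P0 : 0 < P by rewrite expn_gt0 p0.
have Q0 : 0 < Qb by rewrite expn_gt0 q0.
have pm : p ^ m = P * p ^ a by rewrite -expnD subnK.
have qn : q ^ n = Qb * q ^ b by rewrite -expnD subnK.
apply: (@decomp_rel _ _ (P * Qb) ('I_Qb * 'I_P)%type
          (fun ij => ij.1 * p ^ m + ij.2 * q ^ n)); last by rewrite muln_gt0 P0.
- move=> [i j] s /gen2 [u [v ->]]; apply/gen2.
  exists (i + u * Qb), (j + v * P); rewrite /= pm qn; ring.
- move=> t /gen2 [u [v ->]].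
  exists (Ordinal (ltn_pmod u Q0), Ordinal (ltn_pmod v P0)), (u %/ Qb * p ^ a + v %/ P * q ^ b).
  split; first by apply/gen2; exists (u %/ Qb), (v %/ P).
  rewrite /= {1}(divn_eq u Qb) {1}(divn_eq v P) pm qn; ring.
- move=> [i1 j1] [i2 j2] s1 s2 _ _ /= E.
  have L : forall (i j : nat) s, i * p ^ m + j * q ^ n + P * Qb * s
             = i * p ^ m + Qb * (j * q ^ b + P * s) by move=> i j s; rewrite qn; ring.
  rewrite !L in E.
  have Ei : i1 = i2 :> nat.
    apply: (uniq_res (a := p ^ m) (q := Qb) _ _ _ E) => //.
    by rewrite coprimeXl // coprimeXr.
  move: E; rewrite Ei => /addnI /eqP; rewrite eqn_pmul2l // => /eqP E.
  have Ej : j1 = j2 :> nat.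
    apply: (uniq_res (a := q ^ b) (q := P) _ _ _ E) => //.
    by rewrite coprimeXl // coprimeXr // coprime_sym.
  by congr pair; apply: val_inj.
Qed.

Section BnSec.
Variables p q : nat.
Hypotheses (pp : prime p) (pq : prime q) (npq : p != q).

Definition lst n := [seq p ^ (n - i) * q ^ i | i <- iota 0 n.+1].

Lemma lstS n : lst n.+1 = p ^ n.+1 :: map (muln q) (lst n).
Proof.
rewrite /lst -[iota 0 n.+2]/(0 :: iota 1 n.+1) map_cons subn0 expn0 muln1; congr cons.
have -> : iota 1 n.+1 = map (addn 1) (iota 0 n.+1) by rewrite -iotaDl.
rewrite -!map_comp; apply: eq_map => i /=.
by rewrite add1n subSS expnS; ring.
Qed.

Lemma BnS n t : Bn n.+1 p q t <-> exists c M, inS (lst n) M /\ t = c * p ^ n.+1 + q * M.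
Proof.
have q0 := prime_gt0 pq.
rewrite /Bn -/(lst n.+1) genS lstS.
have inS_cons : forall a A x, inS (a :: A) x <-> exists j m, inS A m /\ x = j * a + m by [].
apply: iff_trans (inS_cons _ _ _) _; split.
  case=> c [m [Hm ->]]; case: (iffLR (inS_mapM _ _ q0) Hm) => M [HM ->].
  by exists c, M.
case=> c [M [HM ->]]; exists c, (q * M); split=> //.
by apply: (iffRL (inS_mapM _ _ q0)); exists M.
Qed.

Lemma Bn0 t : Bn 0 p q t.
Proof. rewrite /Bn genS /=; exists t, 0; split=> //; by rewrite muln1 addn0. Qed.

Lemma lst_p n M c : inS (lst n) M -> inS (lst n) (M + c * p ^ n.+1).
Proof.
move=> HM; apply: inS_add => //.
rewrite expnS mulnA; apply: inS_mul.
by rewrite /lst /= subn0 expn0 muln1 inE eqxx.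
Qed.

Local Open Scope ring_scope.

Lemma Bn_step n w : (0 < w)%N -> forall K,
  eqK K (C q ('X^(w * p ^ n.+1)) * tr K (HSw (Bn n p q) (w * q)%N))
        (tr K (HSw (Bn n.+1 p q) w)).
Proof.
move=> w0 K.
have q0 := prime_gt0 pq.
have co : coprime (p ^ n.+1) q by rewrite coprimeXl // prime_co.
have D := @decomp (Bn n p q) (fun x => (w %| x)%N && Bn n.+1 p q (x %/ w)%N) (w * q)%N 'I_q
   (fun c => (w * p ^ n.+1) * c)%N.
have E : C q ('X^(w * p ^ n.+1) : {poly int}) = \sum_(j < q) 'X^((w * p ^ n.+1) * j)%N.
  by rewrite /C; apply: eq_bigr=> i _; rewrite -exprM.
rewrite E; apply: conv_eqK; apply: D; last by rewrite muln_gt0 w0.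
- move=> c s Hs /=.
  have -> : (w * p ^ n.+1 * c + w * q * s = w * (c * p ^ n.+1 + q * s))%N by ring.
  rewrite dvdn_mulr //= mulKn //; apply/BnS; exists c, s; split=> //.
  by rewrite /Bn genS in Hs.
- move=> t /andP [Hd /BnS [c [M [HM Ht]]]].
  exists (Ordinal (ltn_pmod c q0)), (M + c %/ q * p ^ n.+1)%N; split.
    by rewrite /Bn genS; apply: lst_p.
  rewrite /= -(divnK Hd) Ht {1}(divn_eq c q); ring.
- move=> i1 i2 s1 s2 _ _ E1; apply: val_inj => /=.
  have L : forall (i : nat) s, (w * p ^ n.+1 * i + w * q * s = w * (i * p ^ n.+1 + q * s))%N
    by move=> i s; ring.
  move: E1; rewrite !L => /eqP; rewrite eqn_pmul2l // => /eqP E1.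
  exact: (uniq_res co _ _ E1).
Qed.

Lemma Bn_prod n w : (0 < w)%N -> forall K,
  eqK K (\prod_(i < n) C q ('X^(w * (p ^ (n - i) * q ^ i)))
           * tr K (HSw (fun _ => true) (w * q ^ n)%N))
        (tr K (HSw (Bn n p q) w)).
Proof.
elim: n w => [|n IH] w w0 K.
  rewrite big_ord0 mul1r expn0 muln1; apply: eqK_eq; apply: eq_poly => i _.
  by rewrite /HSw Bn0.
apply: (eqK_trans _ (Bn_step n w0 (K:=K))).
have wq0 : (0 < w * q)%N by rewrite muln_gt0 w0 prime_gt0.
apply: (eqK_trans _ (eqK_mull (C q ('X^(w * p ^ n.+1) : {poly int})) (IH _ wq0 K))).
apply: eqK_eq; rewrite big_ord_recl mulrA; congr (_ * _ * _).
- by rewrite subn0 expn0 muln1.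
- apply: eq_bigr => i _; congr (C q ('X^_)).
  by rewrite lift0 subSS expnS; ring.
- by rewrite expnS mulnA.
Qed.

End BnSec.

Local Open Scope ring_scope.

Lemma geom c K : (0 < c)%N ->
  eqK K (C c ('X : {poly int}) * tr K (HSw (fun _ => true) c)) (tr K (fun _ => Posz true)).
Proof.
move=> c0; apply: conv_eqK.
apply: (@decomp (fun _ => true) (fun _ => true) c 'I_c (fun i => (i : nat))) => //.
- move=> t _; exists (Ordinal (ltn_pmod t c0)), (t %/ c)%N; split=> //.
  by rewrite /= {1}(divn_eq t c) addnC mulnC.
- move=> i1 i2 s1 s2 _ _ E; apply: val_inj.
  apply: (uniq_res (a := 1%N) (q := c) (s1 := s1) (s2 := s2) (coprime1n c)) => //.
  - exact: ltn_ord.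
  - exact: ltn_ord.
  - by rewrite !muln1.
Qed.

Lemma C0 c : (0 < c)%N -> (C c ('X : {poly int}))`_0 = 1.
Proof.
case: c => // c _; rewrite /C big_ord_recl expr0 coefD coef1 /= coef_sum big1 ?addr0 //.
by move=> i _; rewrite coefXn.
Qed.

Lemma divB p q n s t : coprime p q -> (0 < q)%N -> (s + t = n.+1)%N -> (1 <= t <= n)%N ->
  dv (C (p ^ s) ('X^(q ^ t) : {poly int}) * C (q ^ n) 'X)
     (\prod_(i < n) C q ('X^(p ^ (n - i) * q ^ i) : {poly int}) * C (p ^ s) 'X).
Proof.
move=> co q0 st /andP [t1 tn].
set F := fun i => C q ('X^(p ^ (n - i) * q ^ i) : {poly int}).
have split : \prod_(i < n) F i = \prod_(i < t) F i * \prod_(i < n - t) F (i + t)%N.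
  rewrite -!(big_mkord xpredT) (big_cat_nat (leq0n t) tn) /=.
  by congr (_ * _); rewrite (big_addn 0 n t) big_mkord.
rewrite split.
have D1 : dv (\prod_(i < t) C q (('X^(p ^ s) : {poly int}) ^+ (q ^ i))) (\prod_(i < t) F i).
  apply: (@dv_prod _ t (fun i => C q (('X^(p ^ s) : {poly int}) ^+ (q ^ i))) F) => i it.
  have -> : F i = C q ((('X^(p ^ s) : {poly int}) ^+ (q ^ i)) ^+ (p ^ (n - i - s))).
    rewrite /F -!exprM; congr (C q ('X^_)).
    rewrite [in LHS](_ : (n - i = s + (n - i - s))%N) ?expnD; [ring|lia].
  by apply: divC; rewrite // coprime_sym coprimeXl.
have D2 : dv (\prod_(i < n - t) C q (('X^(q ^ t) : {poly int}) ^+ (q ^ i)))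
              (\prod_(i < n - t) F (i + t)%N).
  apply: (@dv_prod _ (n - t) (fun i => C q (('X^(q ^ t) : {poly int}) ^+ (q ^ i)))
            (fun i => F (i + t)%N)) => i it.
  have -> : F (i + t)%N = C q ((('X^(q ^ t) : {poly int}) ^+ (q ^ i)) ^+ (p ^ (n - (i + t)))).
    by rewrite /F -!exprM; congr (C q ('X^_)); rewrite expnD; ring.
  by apply: divC; rewrite // coprime_sym coprimeXl.
rewrite !C_prod in D1 D2.
have D3 := dv_mul (dv_mul D1 D2) (ex_intro _ 1 (esym (mulr1 (C (p ^ s) ('X : {poly int}))))).
have H1 : C (p ^ s) ('X : {poly int}) * C (q ^ t) ('X^(p ^ s))
          = C (q ^ t) 'X * C (p ^ s) ('X^(q ^ t)) by rewrite !C_mul mulnC.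
have H2 : C (q ^ t) ('X : {poly int}) * C (q ^ (n - t)) ('X^(q ^ t)) = C (q ^ n) 'X.
  by rewrite C_mul -expnD subnKC.
have E : C (q ^ t) ('X^(p ^ s)) * C (q ^ (n - t)) ('X^(q ^ t)) * C (p ^ s) 'X
         = C (p ^ s) ('X^(q ^ t)) * C (q ^ n) ('X : {poly int}).
  rewrite -H2; transitivity ((C (p ^ s) ('X : {poly int}) * C (q ^ t) ('X^(p ^ s)))
                              * C (q ^ (n - t)) ('X^(q ^ t))); first by ring.
  rewrite H1; ring.
by rewrite -E.
Qed.


Lemma coef0_mul (A B : {poly int}) : (A * B)`_0 = A`_0 * B`_0.
Proof. by rewrite coefM big_ord1. Qed.

Lemma partb p q : prime p -> prime q -> p != q ->
     forall n a b : nat, (1 <= n)%N -> (1 <= a)%N -> (1 <= b)%N -> (2 <= a + b <= n.+1)%N ->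
       poly_related (gen [:: (p ^ a)%N; (q ^ b)%N]) (Bn n p q).
Proof.
move=> pp pq npq n a b n1 a1 b1 /andP [_ abn].
have co := prime_co pp pq npq.
have p0 := prime_gt0 pp; have q0 := prime_gt0 pq.
set t := b; set s := (n.+1 - b)%N.
have st : (s + t = n.+1)%N by rewrite /s /t; lia.
have sa : (a <= s)%N by rewrite /s; lia.
have tn : (1 <= t <= n)%N by rewrite /t; apply/andP; split; lia.
set w := (p ^ (s - a))%N; set e := (w * q ^ b)%N.
have w0 : (0 < w)%N by rewrite expn_gt0 p0.
have pa0 : (0 < p ^ a)%N by rewrite expn_gt0 p0.
have ps : (p ^ s = w * p ^ a)%N by rewrite -expnD subnK.
set U := gen [:: (p ^ a)%N; (q ^ b)%N].
have hA : forall K, eqK K (C (p ^ a) ('X^e) * tr K (HSw (fun _ => true) (p ^ s)))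
                          (tr K (HSw U w)).
  move=> K.
  have E : C (p ^ a) ('X^e : {poly int}) = \sum_(j < p ^ a) 'X^(e * j)%N.
    by rewrite /C; apply: eq_bigr=> i _; rewrite -exprM.
  rewrite E; apply: conv_eqK.
  apply: (@decomp (fun _ => true) (fun x => (w %| x)%N && U (x %/ w)%N) (p ^ s) 'I_(p ^ a)
            (fun j => e * j)%N); last by rewrite ps muln_gt0 w0.
  - move=> j s' _ /=.
    have -> : (e * j + p ^ s * s' = w * (j * q ^ b + s' * p ^ a))%N by rewrite /e ps; ring.
    rewrite dvdn_mulr //= mulKn //; apply/gen2; exists s', j; ring.
  - move=> x /andP [Hd /gen2 [u [v Hx]]].
    exists (Ordinal (ltn_pmod v pa0)), (u + v %/ p ^ a * q ^ b)%N; split=> //.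
    rewrite /= -(divnK Hd) Hx {1}(divn_eq v (p ^ a)) ps /e; ring.
  - move=> i1 i2 s1 s2 _ _ E1; apply: val_inj => /=.
    have L : forall (i : nat) s', (e * i + p ^ s * s' = w * (i * q ^ b + p ^ a * s'))%N
      by move=> i s'; rewrite /e ps; ring.
    move: E1; rewrite !L => /eqP; rewrite eqn_pmul2l // => /eqP E1.
    apply: (uniq_res _ _ _ E1) => //.
    by rewrite coprimeXl // coprimeXr // coprime_sym.
have hB := fun K => Bn_prod pp pq npq n (ltn0Sn 0) (K:=K).
have Dn_eq : \prod_(i < n) C q ('X^(1 * (p ^ (n - i) * q ^ i)) : {poly int})
           = \prod_(i < n) C q ('X^(p ^ (n - i) * q ^ i)).
  by apply: eq_bigr => i _; rewrite mul1n.
set Dn := \prod_(i < n) C q ('X^(p ^ (n - i) * q ^ i) : {poly int}).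
have [g Hg] := divB co q0 st tn.
have Hf : (C (p ^ (s - a)) ('X^(q ^ t)) * g) * (C (p ^ a) ('X^e) * C (q ^ n) 'X)
          = Dn * C (p ^ s) ('X : {poly int}).
  rewrite Hg.
  have -> : C (p ^ s) ('X^(q ^ t) : {poly int})
            = C (p ^ (s - a)) ('X^(q ^ t)) * C (p ^ a) ('X^e).
    by rewrite /e [(w * q ^ b)%N]mulnC exprM -/w C_mul -ps.
  ring.
set f := C (p ^ (s - a)) ('X^(q ^ t)) * g.
exists f, w; split=> //; apply: eqK_conv => K.
have TB : tr K (fun k => Posz (Bn n p q k)) = tr K (HSw (Bn n p q) 1).
  by apply: eq_poly => i _; rewrite /HSw dvd1n divn1.
rewrite TB.
apply: (@eqK_cancel K (C (p ^ s) 'X * C (q ^ n) 'X)).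
  by rewrite coef0_mul !C0 ?mulr1 // expn_gt0 ?p0 ?q0.
set CU := C (p ^ a) ('X^e : {poly int}).
set trHs := tr K (HSw (fun _ => true) (p ^ s)).
set trHq := tr K (HSw (fun _ => true) (q ^ n)).
set G := tr K (fun _ => Posz true).
have hB' := hB K; rewrite Dn_eq mul1n -/Dn -/trHq in hB'.
apply: (@eqK_trans _ _ ((Dn * C (p ^ s) 'X) * G)).
  rewrite mulrA; apply: (eqK_trans (eqK_mull _ (eqK_sym (hA K)))).
  apply: (@eqK_trans _ _ ((f * (CU * C (q ^ n) 'X)) * (C (p ^ s) 'X * trHs))).
    by apply: eqK_eq; rewrite /CU /trHs; ring.
  rewrite Hf; apply: eqK_mull; apply: geom; by rewrite expn_gt0 p0.
apply: eqK_sym.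
apply: (@eqK_trans _ _ ((C (p ^ s) 'X * C (q ^ n) 'X) * (Dn * trHq))).
  by apply: eqK_mull; apply: eqK_sym.
apply: (@eqK_trans _ _ ((Dn * C (p ^ s) 'X) * (C (q ^ n) 'X * trHq))).
  by apply: eqK_eq; rewrite /trHq; ring.
apply: eqK_mull; apply: geom; by rewrite expn_gt0 q0.
Qed.

Local Close Scope ring_scope.

Theorem corollary5 :
  (forall p q : nat, prime p -> prime q -> p != q ->
     forall a b m n : nat, 1 <= a <= m -> 1 <= b <= n ->
       poly_related (gen [:: p ^ a; q ^ b]) (gen [:: p ^ m; q ^ n]))
  /\
  (forall p q : nat, prime p -> prime q -> p != q ->
     forall n a b : nat, 1 <= n -> 1 <= a -> 1 <= b -> 2 <= a + b <= n.+1 ->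
       poly_related (gen [:: p ^ a; q ^ b]) (Bn n p q))
  /\
  (forall (B : seq nat) (nk : nat),
     (* generators n_1, ..., n_(k-1) = B and n_k = nk, with k >= 2 *)
     1 <= size B ->
     all (fun x => 0 < x) (rcons B nk) ->
     is_numsg (gen (rcons B nk)) ->
     let d := \big[gcdn/0]_(x <- B) x in
     poly_related (gen (rcons [seq x %/ d | x <- B] nk)) (gen (rcons B nk))).
Proof.
split; first exact: parta.
split; first exact: partb.
exact: partc.
Qed.
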